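(* Fix a natural number $M\ge 1$. In the random coefficients perturbed utility model described in the context, suppose Assumptions 1–6 (as stated in the context) all hold with this same $M$. Then every $M$-th order moment of the random coefficients, \[ \int \beta_{k_1,\ell_1}\cdots\beta_{k_M,\ell_M}\,d\nu(\beta),\qquad k_m\in\{1,\dots,K\},\ \ell_m\in\{1,\dots,d_{k_m}\}, \] is identified. In addition, for each $\gamma\in\{1,\dots,K\}^{M+1}$, the partial derivative $\partial_\gamma V(0)$ is identified.
   Context: Model. There are $K$ goods. For each good $k\in\{1,\dots,K\}$ there is a covariate vector $x_k=(x_{k,1},\dots,x_{k,d_k})'\in\mathbb{R}^{d_k}$ and a random coefficient vector $\beta_k=(\beta_{k,1},\dots,\beta_{k,d_k})'\in\mathbb{R}^{d_k}$; write $x=(x_1',\dots,x_K')'\in\mathbb{R}^{d}$ with $d=\sum_k d_k$, and $\beta=(\beta_1',\dots,\beta_K')'$. Let $\varepsilon$ be an unobservable of unrestricted dimension taking values in a measurable space $E$, let $B\subseteq\mathbb{R}^K$ be a feasibility set and $D:B\times E\to\mathbb{R}\cup\{-\infty\}$ a disturbance. Choices $Y(x,\beta,\varepsilon)\in\mathbb{R}^K$ satisfy \[ Y(x,\beta,\varepsilon)\in\arg\max_{y\in B}\ \sum_{k=1}^K y_k(\beta_k'x_k)+D(y,\varepsilon) \] (the argmax being nonempty). The average structural function is $\overline{Y}(x)=\int Y(x,\beta,\varepsilon)\,d\tau(\beta,\varepsilon)$ for a probability measure $\tau$ on $(\beta,\varepsilon)$ not depending on $x$; $\overline{Y}_k$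 denotes its $k$-th component. Assumption 1 (slope–intercept independence): under $\tau$, $\beta$ and $\varepsilon$ are independent, i.e. $\tau=\nu\otimes\mu$ with $\nu$ a probability measure over $\beta$ and $\mu$ one over $\varepsilon$, and $\overline{Y}(x)$ is finite. Define $\overline{Y}(x,\beta)=\int Y(x,\beta,\varepsilon)\,d\mu(\varepsilon)$, so $\overline{Y}(x)=\int\overline{Y}(x,\beta)\,d\nu(\beta)$. Let $\overline{B}$ be the convex hull of $B$ and $\overline{D}(y)=\sup\{\int D(\tilde Y(\varepsilon),\varepsilon)\,d\mu(\varepsilon):\tilde Y:E\to B\text{ measurable},\ \int\tilde Y\,d\mu=y\}$ (with $\sup\emptyset=-\infty$). Assumption 2: (i) $\overline{Y}(x,\beta)$ is the unique element of (equivalently, equals) $\arg\max_{y\in\overline{B}}\sum_k y_k(\beta_k'x_k)+\overline{D}(y)$; (ii) $\overline{B}$ is nonempty, closed and convex; (iii) $\overline{D}:\mathbb{R}^K\to\mathbb{R}\cup\{-\infty\}$ is concave, upper semicontinuous, and finite at some $y\in\overline{B}$. Define the integrated indirect utility $V:\mathbb{R}^K\to\mathbb{R}$, $V(u)=\max_{y\in\overline{B}}\sum_k y_ku_k+\overline{D}(y)$. For $\gamma=(\gamma_1,\dots,\gamma_m)\in\{1,\dots,K\}^m$ write $\partial_\gamma V=\partial_{\gamma_1}\cdots\partial_{\gamma_m}V$, derivatives being with respect to the arguments of $V$. Assumption 3: all covariates $x_{k,\ell}$ are continuous, and each $x_k$ is a vector of regressors specific to good $k$ (it enters only the index $\beta_k'x_k$).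 Assumption 4 (for $M$): $\int\beta_{1,1}^M\,d\nu(\beta)$ is finite, known a priori, and nonzero. Assumption 5 (for $M$): (i) for each good $k$ and every $M$-th order partial derivative in $x$, integration and differentiation can be interchanged at $x=0$: $\partial_{x_{k_1,\ell_1}}\cdots\partial_{x_{k_M,\ell_M}}\overline{Y}_k(0)=\int\partial_{x_{k_1,\ell_1}}\cdots\partial_{x_{k_M,\ell_M}}\overline{Y}_k(0,\beta)\,d\nu(\beta)$; (ii) every $M$-th order moment $\int\beta_{k_1,\ell_1}\cdots\beta_{k_M,\ell_M}\,d\nu(\beta)$ exists and is finite; (iii) $V$ is $(M+1)$-times continuously differentiable in a neighborhood of $0$; (iv) $\partial_\gamma V(0)\neq0$ for each $\gamma\in\{1,\dots,K\}^{M+1}$; (v) $\overline{Y}(x)$ is known for $x$ in a neighborhood of $0$, or more generally on $H\cap\mathbb{R}^d_+$ for some neighborhood $H$ of $0$ (derivatives at $0$ then being one-sided). Assumption 6 (for $M$): for each tuple of good indices $(k_1,\dots,k_M)\in\{1,\dots,K\}^M$ there exist characteristic indices $\ell_m\in\{1,\dots,d_{k_m}\}$ such that $\int\beta_{k_1,\ell_1}\cdots\beta_{k_M,\ell_M}\,d\nu(\beta)$ exists and is nonzero (which indices is not assumed known). Identification: a quantity is identified if it is uniquely determined by the objects assumed known (the average structural function on the stated region and the quantities assumed known a priori), i.e. all model specifications $(B,D,\mu,\nu)$ satisfying the hypotheses and generating the same known objects yield the same value of the quantity. *)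

(* Defs.v *)
From HB Require Import structures.
From mathcomp Require Import all_boot all_order all_algebra.
From mathcomp Require Import all_classical all_reals all_analysis.
Set Implicit Arguments. Unset Strict Implicit. Unset Printing Implicit Defensive.
Import Order.TTheory GRing.Theory Num.Theory.
Local Open Scope classical_set_scope.
Local Open Scope ring_scope.

Section S.
Context {R : realType}.

Definition nearv (I : finType) (x y : I -> R) (e : R) : Prop :=
  forall i, `|x i - y i| < e.

Definition shiftv (I : finType) (x : I -> R) (j : I) (h : R) : I -> R :=
  fun i => x i + (if i == j then h else 0).

Definition has_pd_within (I : finType) (S : set (I -> R)) (f : (I -> R) -> R)
  (j : I) (x : I -> R) (l : R) : Prop :=
  (forall del, 0 < del -> exists h, 0 < `|h| < del /\ S (shiftv x j h)) /\
  (forall eps, 0 < eps -> exists2 del, 0 < del & forall h, 0 < `|h| < del ->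
     S (shiftv x j h) -> `|(f (shiftv x j h) - f x) / h - l| < eps).

Definition pd (I : finType) (S : set (I -> R)) (f : (I -> R) -> R) (j : I) :
  (I -> R) -> R := fun x => xget 0 [set l | has_pd_within S f j x l].

Definition pdn (I : finType) (S : set (I -> R)) (f : (I -> R) -> R) (js : seq I) :
  (I -> R) -> R := foldr (fun j g => pd S g j) f js.

Fixpoint pdn_ex (I : finType) (S : set (I -> R)) (f : (I -> R) -> R) (js : seq I)
  (x : I -> R) : Prop :=
  match js with
  | [::] => True
  | j :: js' => (exists2 e, 0 < e & forall y, S y -> nearv x y e -> pdn_ex S f js' y)
                /\ exists l, has_pd_within S (pdn S f js') j x l
  end.
End S.

Section Model.
Local Open Scope ring_scope.
Context {R : realType} {K : nat} (dk : 'I_K -> nat).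

(* index set of the covariate / coefficient coordinates (k, l), l < d_k *)
Definition idx : finType := {k : 'I_K & 'I_(dk k)}.

Definition zerov (I : finType) : I -> R := fun _ => 0.

Definition contv (I : finType) (f : (I -> R) -> R) (x : I -> R) : Prop :=
  forall eps, 0 < eps -> exists2 del, 0 < del & forall y, nearv x y del -> `|f y - f x| < eps.

Definition nbhd0 (H : set (idx -> R)) : Prop :=
  exists2 e, 0 < e & forall x, nearv (@zerov idx) x e -> H x.

(* the region on which the ASF is known: H, or H intersected with R^d_+ *)
Definition region (H : set (idx -> R)) (orth : bool) : set (idx -> R) :=
  fun x => H x /\ (orth -> forall i, 0 <= x i).

Definition index_u (b x : idx -> R) : 'I_K -> R :=
  fun k => \sum_(l < dk k) b (existT _ k l) * x (existT _ k l).

Definition convexv (C : set ('I_K -> R)) : Prop :=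
  forall y z t, 0 <= t <= 1 -> C y -> C z -> C (fun k => t * y k + (1 - t) * z k).

Definition closedv (C : set ('I_K -> R)) : Prop :=
  forall y, (forall e, 0 < e -> exists z, C z /\ nearv y z e) -> C y.

Definition conv_hull (B : set ('I_K -> R)) : set ('I_K -> R) :=
  \bigcap_(C in [set C | convexv C /\ B `<=` C]) C.

Definition obj (Df : ('I_K -> R) -> \bar R) (u y : 'I_K -> R) : \bar R :=
  ((\sum_k y k * u k)%:E + Df y)%E.

Context {dE : measure_display} {E : measurableType dE}.

Definition Dbar (mu : probability E R) (B : set ('I_K -> R))
  (D : ('I_K -> R) -> E -> \bar R) (y : 'I_K -> R) : \bar R :=
  ereal_sup [set (\int[mu]_e D (Yt e) e)%E | Yt in
    [set Yt : E -> 'I_K -> R | (forall e, B (Yt e)) /\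
       forall k, mu.-integrable setT (fun e => (Yt e k)%:E) /\
                 (\int[mu]_e (Yt e k)%:E)%E = (y k)%:E]].

Definition Vfun (mu : probability E R) (B : set ('I_K -> R))
  (D : ('I_K -> R) -> E -> \bar R) (u : 'I_K -> R) : R :=
  fine (ereal_sup [set obj (Dbar mu B D) u y | y in conv_hull B]).

Definition Ybar_beta (mu : probability E R) (Y : (idx -> R) -> (idx -> R) -> E -> 'I_K -> R)
  (x b : idx -> R) (k : 'I_K) : \bar R :=
  (\int[mu]_e (Y x b e k)%:E)%E.

Context {dO : measure_display} {Om : measurableType dO}.

Definition Ybar (P : probability Om R) (beta : Om -> idx -> R) (mu : probability E R)
  (Y : (idx -> R) -> (idx -> R) -> E -> 'I_K -> R) (x : idx -> R) (k : 'I_K) : \bar R :=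
  (\int[(P \x mu)%E]_z (Y x (beta z.1) z.2 k)%:E)%E.

Definition moment (P : probability Om R) (beta : Om -> idx -> R) (s : seq idx) : \bar R :=
  (\int[P]_w (\prod_(i <- s) beta w i)%:E)%E.

End Model.
Arguments zerov {R} I.

Section Assumptions.
Local Open Scope ring_scope.
Context {R : realType} {K : nat} (dk : 'I_K -> nat).
Context {dE : measure_display} {E : measurableType dE}.
Context {dO : measure_display} {Om : measurableType dO}.

(* A model specification: nu is the law of beta under P; mu the law of eps;
   B feasibility set, D disturbance, Y the choice function Y(x, beta, eps). *)
Record model_assumptions (M : nat) (i0 : idx dk) (S : set (idx dk -> R))
  (P : probability Om R) (beta : Om -> idx dk -> R) (mu : probability E R)
  (B : set ('I_K -> R)) (D : ('I_K -> R) -> E -> \bar R)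
  (Y : (idx dk -> R) -> (idx dk -> R) -> E -> 'I_K -> R) : Prop := {
  beta_meas : forall i, measurable_fun setT (fun w => beta w i);
  D_values : forall y e, B y -> (D y e < +oo)%E;
  Y_choice : forall x b e, B (Y x b e) /\
     forall y, B y -> (obj (D^~ e) (index_u b x) y <= obj (D^~ e) (index_u b x) (Y x b e))%E;
  (* Assumption 1 (independence is built in via the product measure P \x mu) *)
  A1 : forall x k, (P \x mu)%E.-integrable setT (fun z => (Y x (beta z.1) z.2 k)%:E);
  A2i : forall x b, exists yb : 'I_K -> R,
     (forall k, mu.-integrable setT (fun e => (Y x b e k)%:E) /\
                Ybar_beta mu Y x b k = (yb k)%:E) /\
     conv_hull B yb /\
     (forall y, conv_hull B y -> (obj (Dbar mu B D) (index_u b x) y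
                                  <= obj (Dbar mu B D) (index_u b x) yb)%E) /\
     (forall y, conv_hull B y ->
        (forall z, conv_hull B z -> (obj (Dbar mu B D) (index_u b x) z
                                     <= obj (Dbar mu B D) (index_u b x) y)%E) -> y = yb);
  A2ii : (exists y, conv_hull B y) /\ closedv (conv_hull B) /\ convexv (conv_hull B);
  A2iii : (forall y, (Dbar mu B D y < +oo)%E) /\
     (forall y z t, 0 < t < 1 ->
        (t%:E * Dbar mu B D y + (1 - t)%R%:E * Dbar mu B D z
          <= Dbar mu B D (fun k => (t * y k + (1 - t) * z k)%R))%E) /\
     (forall y a, (Dbar mu B D y < a%:E)%E ->
        exists2 e, 0 < e & forall z, nearv y z e -> (Dbar mu B D z < a%:E)%E) /\
     (exists y, conv_hull B y /\ Dbar mu B D y \is a fin_num);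
  V_max : forall u, exists y, conv_hull B y /\ obj (Dbar mu B D) u y \is a fin_num /\
     forall z, conv_hull B z -> (obj (Dbar mu B D) u z <= obj (Dbar mu B D) u y)%E;
  (* Assumption 4 (knowledge of the value is imposed in the theorem) *)
  A4 : P.-integrable setT (fun w => (beta w i0 ^+ M)%:E) /\
       (\int[P]_w (beta w i0 ^+ M)%:E)%E != 0%E;
  A5i : forall (k : 'I_K) (t : M.-tuple (idx dk)),
     pdn_ex S (fun x => fine (Ybar P beta mu Y x k)) t (zerov (idx dk)) /\
     (forall w, pdn_ex S (fun x => fine (Ybar_beta mu Y x (beta w) k)) t (zerov (idx dk))) /\
     P.-integrable setT
       (fun w => (pdn S (fun x => fine (Ybar_beta mu Y x (beta w) k)) t (zerov (idx dk)))%:E) /\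
     (pdn S (fun x => fine (Ybar P beta mu Y x k)) t (zerov (idx dk)))%:E =
       (\int[P]_w (pdn S (fun x => fine (Ybar_beta mu Y x (beta w) k)) t (zerov (idx dk)))%:E)%E;
  A5ii : forall t : M.-tuple (idx dk),
     P.-integrable setT (fun w => (\prod_(i <- t) beta w i)%:E);
  A5iii : exists2 e, 0 < e & forall js : seq 'I_K, (size js <= M.+1)%N ->
     forall u, nearv (zerov 'I_K) u e ->
       pdn_ex setT (Vfun mu B D) js u /\ contv (pdn setT (Vfun mu B D) js) u;
  A5iv : forall g : M.+1.-tuple 'I_K, pdn setT (Vfun mu B D) g (zerov 'I_K) != 0;
  A6 : forall ks : M.-tuple 'I_K, exists t : M.-tuple (idx dk),
     (forall m : 'I_M, tag (tnth t m) = tnth ks m) /\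
     P.-integrable setT (fun w => (\prod_(i <- t) beta w i)%:E) /\
     moment P beta t != 0%E
}.
End Assumptions.

(* Main.v *)
Require Import Defs.
From HB Require Import structures.
From mathcomp Require Import all_boot all_order all_algebra.
From mathcomp Require Import all_classical all_reals all_analysis.
From mathcomp Require Import lra ring zify.
Import Order.TTheory GRing.Theory Num.Theory.
Local Open Scope classical_set_scope.
Local Open Scope ring_scope.

Module PA.
Import numFieldNormedType.Exports.
Set Implicit Arguments. Unset Strict Implicit. Unset Printing Implicit Defensive.
Section Gen.
Context {R : realType}.

Lemma zero_of_small (a : R) : (forall e, 0 < e -> `|a| < e + e) -> a = 0.
Proof.
move=> h; apply/eqP; apply/negPn/negP => ha.
have hp : 0 < `|a| / 2 by rewrite divr_gt0 // normr_gt0.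
have := h _ hp; rewrite -splitr ltxx //.
Qed.

Lemma nearv_open (I : finType) (x0 x : I -> R) r : nearv x0 x r ->
  exists2 d, 0 < d & forall y, nearv x y d -> nearv x0 y r.
Proof.
move=> hx; exists (\big[Order.min/1]_i (r - `|x0 i - x i|)).
  apply/bigmin_gtP; split => // i _; by rewrite subr_gt0.
move=> y hy i; have := hy i.
move=> /lt_le_trans/(_ (bigmin_le _ i (fun i => r - `|x0 i - x i|))) h.
rewrite (le_lt_trans (ler_distD (x i) _ _)) //.
by rewrite -ltrBrDl.
Qed.

Lemma nearv_shift (I : finType) (x : I -> R) j h d : `|h| < d -> nearv x (shiftv x j h) d.
Proof.
move=> hh i; rewrite /shiftv opprD addrA subrr sub0r normrN.
by case: (i == j) => //; rewrite normr0 (le_lt_trans _ hh).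
Qed.

Lemma shiftvK (I : finType) (x : I -> R) j h h' :
  shiftv (shiftv x j h) j h' = shiftv x j (h' + h).
Proof.
apply/funext => i; rewrite /shiftv; case: (i == j); rewrite ?addr0 //.
by rewrite -addrA [h + h']addrC.
Qed.

Lemma shiftvC (I : finType) (x : I -> R) a b s t :
  shiftv (shiftv x a s) b t = shiftv (shiftv x b t) a s.
Proof. by apply/funext => i; rewrite /shiftv -!addrA [X in _ + X]addrC. Qed.

Lemma shiftv0 (I : finType) (x : I -> R) j : shiftv x j 0 = x.
Proof. by apply/funext => i; rewrite /shiftv; case: (i == j); rewrite addr0. Qed.

Lemma has_pd_uniq (I : finType) S (f : (I -> R) -> R) j x l1 l2 :
  has_pd_within S f j x l1 -> has_pd_within S f j x l2 -> l1 = l2.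
Proof.
move=> [hS h1] [_ h2]; apply/eqP; rewrite -subr_eq0; apply/eqP.
apply: zero_of_small => e e0.
have [d1 d10 hd1] := h1 e e0; have [d2 d20 hd2] := h2 e e0.
have hm : 0 < Order.min d1 d2 by rewrite lt_min d10 d20.
have [h [/andP[hp hd] hSh]] := hS (Order.min d1 d2) hm.
move: hd; rewrite lt_min => /andP[hd1' hd2'].
have := hd1 h; rewrite hp hd1' => /(_ isT hSh) q1.
have := hd2 h; rewrite hp hd2' => /(_ isT hSh) q2.
rewrite (le_lt_trans (ler_distD ((f (shiftv x j h) - f x) / h) _ _)) //.
by rewrite distrC; apply: ltrD.
Qed.

Lemma pd_eq (I : finType) S (f : (I -> R) -> R) j x l :
  has_pd_within S f j x l -> pd S f j x = l.
Proof.
move=> hl; rewrite /pd; apply: xget_unique => // l' hl'.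
exact: has_pd_uniq hl' hl.
Qed.

Lemma pd_ext_S (I : finType) S (f g : (I -> R) -> R) j x :
  (forall y, S y -> f y = g y) -> S x -> pd S f j x = pd S g j x.
Proof.
move=> hfg hx; rewrite /pd; congr (xget 0 _); apply/funext => l.
apply/propext; rewrite /has_pd_within; split => -[h1 h2]; split => // e e0;
  have [d d0 hd] := h2 e e0; exists d => // h hh hS; have := hd h hh hS;
  by rewrite !hfg.
Qed.

Lemma pdn_ext_S (I : finType) S (f g : (I -> R) -> R) js :
  (forall y, S y -> f y = g y) -> forall x, S x -> pdn S f js x = pdn S g js x.
Proof.
move=> hfg; elim: js => [|j js IH] x hx /=; first exact: hfg.
exact: pd_ext_S.
Qed.

Lemma has_pd_ball (I : finType) (f g : (I -> R) -> R) x0 r j x l :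
  (forall y, nearv x0 y r -> f y = g y) -> nearv x0 x r ->
  has_pd_within setT f j x l -> has_pd_within setT g j x l.
Proof.
move=> hfg hx [h1 h2]; split => // e e0.
have [d d0 hd] := h2 e e0; have [d' d'0 hd'] := nearv_open hx.
exists (Order.min d d'); first by rewrite lt_min d0 d'0.
move=> h /andP[hp]; rewrite lt_min => /andP[hhd hhd'] _.
rewrite -!hfg //; last exact/hd'/nearv_shift.
by apply: hd => //; rewrite hp.
Qed.

Lemma pd_ext_ball (I : finType) (f g : (I -> R) -> R) x0 r j x :
  (forall y, nearv x0 y r -> f y = g y) -> nearv x0 x r ->
  pd setT f j x = pd setT g j x.
Proof.
move=> hfg hx; rewrite /pd; congr (xget 0 _); apply/funext => l.
apply/propext; split; first exact: has_pd_ball hfg hx.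
by apply: has_pd_ball hx => y hy; rewrite hfg.
Qed.

Lemma pdn_ext_ball (I : finType) (f g : (I -> R) -> R) x0 r js :
  (forall y, nearv x0 y r -> f y = g y) ->
  forall x, nearv x0 x r -> pdn setT f js x = pdn setT g js x.
Proof.
move=> hfg; elim: js => [|j js IH] x hx /=; first exact: hfg.
exact: (pd_ext_ball _ IH hx).
Qed.

Lemma pdn_cat (I : finType) S (f : (I -> R) -> R) a b :
  pdn S f (a ++ b) = pdn S (pdn S f b) a.
Proof. by rewrite /pdn foldr_cat. Qed.

End Gen.

End PA.
Import PA.

Module PB.
Import numFieldNormedType.Exports.
Set Implicit Arguments. Unset Strict Implicit. Unset Printing Implicit Defensive.
Section MV.
Context {R : realType}.

Lemma has_pd_derive (I : finType) (F : (I -> R) -> R) a w s l :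
  has_pd_within setT F a (shiftv w a s) l ->
  is_derive s 1 (fun t => F (shiftv w a t)) l.
Proof.
move=> [_ h2].
have hc : h^-1 *: (((fun t => F (shiftv w a t)) \o shift s) (h *: (1 : R^o))
            - F (shiftv w a s)) @[h --> (0 : R)^'] --> l.
  apply/cvgrPdist_lt => e e0.
  have [d d0 hd] := h2 e e0.
  apply/nbhs_ballP; exists d => //= h; rewrite /ball /= sub0r normrN => hhd hne.
  rewrite distrC.
  have := hd h; rewrite normr_gt0 hne hhd => /(_ isT Logic.I).
  rewrite /shift /= -[X in shiftv w a (X + s)]/(h * 1) mulr1 -shiftvK.
  by rewrite -[h^-1 *: _]/(h^-1 * _) mulrC.
apply: DeriveDef; first exact: cvgP hc.
exact: norm_cvg_lim hc.
Qed.

Lemma mvt2 (phi dphi : R -> R) (s : R) :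
  (forall x : R, `|x| <= `|s| -> is_derive x (1 : R) phi (dphi x)) ->
  exists2 c, `|c| <= `|s| & phi s - phi 0 = dphi c * s.
Proof.
move=> hd.
have cont : forall a b, `|a| <= `|s| -> `|b| <= `|s| -> {within `[a, b], continuous phi}.
  move=> a b ha hb; apply: derivable_within_continuous => x.
  rewrite in_itv /= => /andP[h1 h2]; apply: (@ex_derive _ _ _ _ _ _ _ (hd x _)).
  rewrite ler_norml; move: ha hb; rewrite !ler_norml => /andP[? ?] /andP[? ?].
  apply/andP; split; lra.
have hs0 : `|0 : R| <= `|s| by rewrite normr0.
have [s0|s0|->] := ltgtP s 0.
- have hd' : forall x, x \in `]s, 0[ -> is_derive x (1 : R) phi (dphi x).
    move=> x; rewrite in_itv /= => /andP[? ?]; apply: hd.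
    by rewrite ltr0_norm // ltr0_norm //; lra.
  have [c hc e] := MVT s0 hd' (cont s 0 (lexx _) hs0).
  exists c; first by move: hc; rewrite in_itv /= => /andP[? ?];
      rewrite ltr0_norm // ltr0_norm //; lra.
  by move: e; rewrite sub0r mulrN => /(congr1 (fun x => - x)); rewrite opprB opprK.
- have hd' : forall x, x \in `]0, s[ -> is_derive x (1 : R) phi (dphi x).
    move=> x; rewrite in_itv /= => /andP[? ?]; apply: hd.
    by rewrite gtr0_norm // gtr0_norm //; lra.
  have [c hc e] := MVT s0 hd' (cont 0 s hs0 (lexx _)).
  exists c; first by move: hc; rewrite in_itv /= => /andP[? ?];
      rewrite gtr0_norm // gtr0_norm //; lra.
  by rewrite e subr0.
- by exists 0; rewrite ?normr0 // subrr mulr0.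
Qed.


Lemma nearv_sh2 (I : finType) (u : I -> R) a b s t d : `|s| + `|t| < d ->
  nearv u (shiftv (shiftv u a s) b t) d.
Proof.
move=> h i; rewrite /shiftv.
have -> : forall x y z : R, x - (x + y + z) = - (y + z) by move=> x y z; lra.
rewrite normrN (le_lt_trans (ler_normD _ _)) // (le_lt_trans _ h) //.
by apply: lerD; case: (_ == _); rewrite ?normr0.
Qed.

Lemma pd_derive (I : finType) (G : (I -> R) -> R) a w x :
  (exists l, has_pd_within setT G a (shiftv w a x) l) ->
  is_derive x (1 : R) (fun t => G (shiftv w a t)) (pd setT G a (shiftv w a x)).
Proof. move=> [l hl]; rewrite (pd_eq hl); exact: has_pd_derive. Qed.

Lemma schwarz (I : finType) (F : (I -> R) -> R) a b (u : I -> R) rho :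
  0 < rho ->
  (forall v, nearv u v rho -> exists l, has_pd_within setT F a v l) ->
  (forall v, nearv u v rho -> exists l, has_pd_within setT F b v l) ->
  (forall v, nearv u v rho -> exists l, has_pd_within setT (pd setT F a) b v l) ->
  (forall v, nearv u v rho -> exists l, has_pd_within setT (pd setT F b) a v l) ->
  contv (pd setT (pd setT F a) b) u -> contv (pd setT (pd setT F b) a) u ->
  pd setT (pd setT F a) b u = pd setT (pd setT F b) a u.
Proof.
move=> rho0 hA hB hAB hBA cAB cBA.
set Fa := pd setT F a; set Fb := pd setT F b.
set Fab := pd setT Fa b; set Fba := pd setT Fb a.
have hD : forall (G : (I -> R) -> R) c w,
    (forall v, nearv u v rho -> exists l, has_pd_within setT G c v l) ->
    forall x, nearv u (shiftv w c x) rho ->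
    is_derive x (1 : R) (fun t => G (shiftv w c t)) (pd setT G c (shiftv w c x)).
  by move=> G c w hG x hx; apply: pd_derive; apply: hG.
have key : forall s t, `|s| + `|t| < rho -> exists s1 t1 s2 t2,
    [/\ `|s1| <= `|s|, `|t1| <= `|t|, `|s2| <= `|s|, `|t2| <= `|t| &
     Fab (shiftv (shiftv u a s1) b t1) * t * s =
     Fba (shiftv (shiftv u b t2) a s2) * s * t].
  move=> s t hst.
  have hn1 : forall x y, `|x| <= `|s| -> `|y| <= `|t| ->
      nearv u (shiftv (shiftv u a x) b y) rho.
    by move=> x y hx hy; apply: nearv_sh2; apply: le_lt_trans (lerD hx hy) hst.
  have hn2 : forall x y, `|x| <= `|s| -> `|y| <= `|t| ->
      nearv u (shiftv (shiftv u b y) a x) rho.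
    by move=> x y hx hy; rewrite shiftvC; apply: hn1.
  have ht0 : `|0 : R| <= `|t| by rewrite normr0.
  have hs0 : `|0 : R| <= `|s| by rewrite normr0.
  pose f1 := fun x => F (shiftv (shiftv u b t) a x).
  pose f0 := fun x => F (shiftv (shiftv u b 0) a x).
  have [s1 hs1 e1] := @mvt2 (f1 - f0)
     (fun x => Fa (shiftv (shiftv u b t) a x) - Fa (shiftv (shiftv u b 0) a x)) s
     (fun x hx => is_deriveB
        (hD F a _ hA x (hn2 _ _ hx (lexx _)))
        (hD F a _ hA x (hn2 _ _ hx ht0))).
  have [t1 ht1 e2] := @mvt2 (fun y => Fa (shiftv (shiftv u a s1) b y))
     (fun y => Fab (shiftv (shiftv u a s1) b y)) t
     (fun y hy => hD Fa b _ hAB y (hn1 _ _ hs1 hy)).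
  pose g1 := fun y => F (shiftv (shiftv u a s) b y).
  pose g0 := fun y => F (shiftv (shiftv u a 0) b y).
  have [t2 ht2 e3] := @mvt2 (g1 - g0)
     (fun y => Fb (shiftv (shiftv u a s) b y) - Fb (shiftv (shiftv u a 0) b y)) t
     (fun y hy => is_deriveB
        (hD F b _ hB y (hn1 _ _ (lexx _) hy))
        (hD F b _ hB y (hn1 _ _ hs0 hy))).
  have [s2 hs2 e4] := @mvt2 (fun x => Fb (shiftv (shiftv u b t2) a x))
     (fun x => Fba (shiftv (shiftv u b t2) a x)) s
     (fun x hx => hD Fb a _ hBA x (hn2 _ _ hx ht2)).
  exists s1, t1, s2, t2; split => //.
  move: e1 e3; rewrite /f1 /f0 /g1 /g0 /= => e1 e3.
  rewrite !(shiftvC u b a) in e1 e4 *.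
  by rewrite -e2 -e4 -e1 -e3 !fctE !(shiftvC u b a) !shiftv0; lra.
apply/eqP; rewrite -subr_eq0; apply/eqP; apply: zero_of_small => e e0.
have [d1 d10 hd1] := cAB e e0; have [d2 d20 hd2] := cBA e e0.
set d := Order.min rho (Order.min d1 d2).
have d0 : 0 < d by rewrite !lt_min rho0 d10 d20.
have hdr : d <= rho by rewrite ge_min lexx.
have hdd1 : d <= d1 by rewrite /d !ge_min lexx orbT.
have hdd2 : d <= d2 by rewrite /d !ge_min lexx !orbT.
pose s := d / 3.
have s0 : 0 < s by rewrite /s divr_gt0.
have hs : `|s| + `|s| < d by rewrite gtr0_norm // /s; lra.
have [s1 [t1 [s2 [t2 [h1 h2 h3 h4 heq]]]]] := key s s (lt_le_trans hs hdr).
have np : nearv u (shiftv (shiftv u a s1) b t1) d1.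
  apply: nearv_sh2; apply: le_lt_trans (lerD h1 h2) (lt_le_trans hs hdd1).
have nq : nearv u (shiftv (shiftv u b t2) a s2) d2.
  apply: nearv_sh2; apply: le_lt_trans (lerD h4 h3) (lt_le_trans hs hdd2).
have q1 := hd1 _ np; have q2 := hd2 _ nq.
have sn0 : s != 0 by rewrite gt_eqF.
have heq2 : Fab (shiftv (shiftv u a s1) b t1) = Fba (shiftv (shiftv u b t2) a s2).
  by apply: (mulIf sn0); apply: (mulIf sn0); rewrite heq -mulrA [s * s]mulrC mulrA.
apply: le_lt_trans (ler_distD (Fab (shiftv (shiftv u a s1) b t1)) _ _) _.
by rewrite {2}heq2 distrC; apply: ltrD.
Qed.
End MV.

End PB.
Import PB.

Module PC.
Import numFieldNormedType.Exports.
Set Implicit Arguments. Unset Strict Implicit. Unset Printing Implicit Defensive.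
Section Env.
Context {R : realType} {K : nat} (dk : 'I_K -> nat).
Context {dE : measure_display} {E : measurableType dE}.
Context {dO : measure_display} {Om : measurableType dO}.

Lemma V_max_val (mu : probability E R) B D (u y : 'I_K -> R) :
  conv_hull B y -> obj (Dbar mu B D) u y \is a fin_num ->
  (forall z, conv_hull B z -> (obj (Dbar mu B D) u z <= obj (Dbar mu B D) u y)%E) ->
  Vfun mu B D u = fine (obj (Dbar mu B D) u y).
Proof.
move=> hy hf hmax; rewrite /Vfun; congr fine; apply/eqP; rewrite eq_le; apply/andP; split.
  by apply: ge_ereal_sup => _ [z hz <-]; exact: hmax.
by apply: ereal_sup_ubound; exists y.
Qed.

Lemma sum_shift (y u : 'I_K -> R) k h :
  \sum_i y i * shiftv u k h i = \sum_i y i * u i + y k * h.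
Proof.
rewrite /shiftv; under eq_bigr do rewrite mulrDr; rewrite big_split /=; congr (_ + _).
rewrite (bigD1 k) //= eqxx big1 ?addr0 // => i /negbTE ->; by rewrite mulr0.
Qed.

Lemma aux_pos (y l q N hh : R) : 0 < hh -> y * hh <= N -> q * hh = N ->
  q - l < y - l -> False.
Proof. move=> *; nra. Qed.

Lemma aux_neg (y l q N hh : R) : hh < 0 -> y * hh <= N -> q * hh = N ->
  - (l - y) < q - l -> False.
Proof. move=> *; nra. Qed.

Lemma envelope M i0 S (P : probability Om R) beta (mu : probability E R) B D Y
  (h : model_assumptions (dk:=dk) M i0 S P beta mu B D Y) x b k :
  (exists l, has_pd_within setT (Vfun mu B D) k (index_u b x) l) ->
  fine (Ybar_beta mu Y x b k) = pd setT (Vfun mu B D) k (index_u b x).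
Proof.
move=> [l hl]; rewrite (pd_eq hl).
set u := index_u b x.
have [yb [hyb [hhull [hmax huniq]]]] := A2i h x b.
have [ys [hys [hfin hmaxs]]] := V_max h u.
rewrite (proj2 (hyb k)) /=.
have hobj : obj (Dbar mu B D) u yb = obj (Dbar mu B D) u ys.
  by apply/eqP; rewrite eq_le hmaxs // hmax.
have hfinb : obj (Dbar mu B D) u yb \is a fin_num by rewrite hobj.
have hDfin : Dbar mu B D yb \is a fin_num.
  by move: hfinb; rewrite /obj fin_numD => /andP[_ ->].
set d := fine (Dbar mu B D yb).
have hobjE : forall u', obj (Dbar mu B D) u' yb = (\sum_i yb i * u' i + d)%:E.
  by move=> u'; rewrite /obj /d EFinD fineK.
have hV : forall u', \sum_i yb i * u' i + d <= Vfun mu B D u'.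
  move=> u'; have [y' [hy' [hfin' hmax']]] := V_max h u'.
  rewrite (V_max_val hy' hfin' hmax').
  have := hmax' yb hhull; rewrite hobjE => hle.
  by have := fine_le _ hfin' hle; rewrite /= => ->//; rewrite hobjE.
have hV0 : Vfun mu B D u = \sum_i yb i * u i + d.
  by rewrite (V_max_val hhull hfinb hmax) hobjE.
have hq : forall hh, yb k * hh <= Vfun mu B D (shiftv u k hh) - Vfun mu B D u.
  by move=> hh; rewrite hV0; have := hV (shiftv u k hh); rewrite sum_shift; lra.
case: hl => _ hl.
apply/eqP; rewrite eq_le; apply/andP; split; rewrite leNgt; apply/negP => hlt.
- have e0 : 0 < yb k - l by rewrite subr_gt0.
  have [del d0 hd] := hl _ e0.
  have hp : 0 < `|del / 2| < del by rewrite gtr0_norm; [apply/andP; split; lra | lra].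
  have := hd (del / 2) hp Logic.I; rewrite ltr_norml => /andP[h1 h2].
  set hh := del / 2 in h1 h2.
  have hh0 : 0 < hh by rewrite /hh; lra.
  have hN := hq hh.
  set N := Vfun mu B D (shiftv u k hh) - Vfun mu B D u in hN h1 h2.
  have : N / hh * hh = N by rewrite divfK // gt_eqF.
  set q := N / hh in h1 h2 *; move=> hqe.
  exact: aux_pos hh0 hN hqe h2.
- have e0 : 0 < l - yb k by rewrite subr_gt0.
  have [del d0 hd] := hl _ e0.
  have hp : 0 < `|- (del / 2)| < del
    by rewrite normrN gtr0_norm; [apply/andP; split; lra | lra].
  have := hd (- (del / 2)) hp Logic.I; rewrite ltr_norml => /andP[h1 h2].
  set hh := - (del / 2) in h1 h2.
  have hh0 : hh < 0 by rewrite /hh; lra.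
  have hN := hq hh.
  set N := Vfun mu B D (shiftv u k hh) - Vfun mu B D u in hN h1 h2.
  have : N / hh * hh = N by rewrite divfK // lt_eqF.
  set q := N / hh in h1 h2 *; move=> hqe.
  exact: aux_neg hh0 hN hqe h1.
Qed.

End Env.

End PC.
Import PC.

Module PD.
Import numFieldNormedType.Exports.
Set Implicit Arguments. Unset Strict Implicit. Unset Printing Implicit Defensive.
Section Chain.
Context {R : realType} {K : nat} (dk : 'I_K -> nat).

Lemma idx_shift (b x : idx dk -> R) (j : idx dk) h :
  index_u b (shiftv x j h) = shiftv (index_u b x) (tag j) (b j * h).
Proof.
apply/funext => k; rewrite /index_u /shiftv.
under eq_bigr do rewrite mulrDr; rewrite big_split /=; congr (_ + _).
case: j => kj lj /=.
case: (eqVneq k kj) => [ekj|nkj].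
- subst kj; rewrite (bigD1 lj) //= eq_Tagged /= eqxx big1 ?addr0 // => l hl.
  by rewrite eq_Tagged /= (negbTE hl) mulr0.
- rewrite big1 // => l _.
  have -> : (existT (fun k0 => 'I_(dk k0)) k l == existT _ kj lj) = false.
    by apply/negbTE; apply: contra nkj => /eq_tag /= ->.
  by rewrite mulr0.
Qed.

Lemma idx_zero (b : idx dk -> R) : index_u b (zerov (idx dk)) = zerov 'I_K.
Proof. by apply/funext => k; rewrite /index_u big1 // => l _; rewrite /zerov mulr0. Qed.

Definition Cb (b : idx dk -> R) : R := 1 + \sum_k \sum_(l < dk k) `|b (existT _ k l)|.

Lemma Cb_gt0 b : 0 < Cb b.
Proof.
rewrite /Cb; apply: (lt_le_trans ltr01); rewrite lerDl.
by apply: sumr_ge0 => k _; apply: sumr_ge0 => l _.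
Qed.

Lemma idx_bound (b x : idx dk -> R) r : 0 < r -> nearv (zerov _) x r ->
  nearv (zerov _) (index_u b x) (Cb b * r).
Proof.
move=> r0 hx k; rewrite /zerov sub0r normrN /index_u.
apply: (le_lt_trans (ler_norm_sum _ _ _)).
apply: (@le_lt_trans _ _ ((\sum_(l < dk k) `|b (existT _ k l)|) * r)).
  rewrite mulr_suml; apply: ler_sum => l _; rewrite normrM ler_wpM2l //.
  by have := hx (existT _ k l); rewrite /zerov sub0r normrN => /ltW.
rewrite ltr_pM2r // /Cb (bigD1 k) //=.
have : 0 <= \sum_(i < K | i != k) \sum_(l < dk i) `|b (existT _ i l)|.
  by apply: sumr_ge0 => k' _; apply: sumr_ge0 => l _.
lra.
Qed.

End Chain.

Section ChainModel.
Context {R : realType} {K : nat} (dk : 'I_K -> nat).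
Context {dE : measure_display} {E : measurableType dE}.
Context {dO : measure_display} {Om : measurableType dO}.

Lemma chain M i0 (H : set (idx dk -> R)) orth (P : probability Om R) beta
  (mu : probability E R) B D Y
  (h : model_assumptions (dk:=dk) M i0 (region H orth) P beta mu B D Y)
  eH (eH0 : 0 < eH) (heH : forall x, nearv (zerov _) x eH -> H x)
  e (e0 : 0 < e) (he : forall js : seq 'I_K, (size js <= M.+1)%N ->
     forall u, nearv (zerov 'I_K) u e ->
       pdn_ex setT (Vfun mu B D) js u /\ contv (pdn setT (Vfun mu B D) js) u)
  (b : idx dk -> R) (k : 'I_K) :
  forall js : seq (idx dk), (size js <= M)%N ->
  forall x, region H orth x -> nearv (zerov _) x (Order.min eH (e / Cb b)) ->
  pdn (region H orth) (fun x => fine (Ybar_beta mu Y x b k)) js x =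
  (\prod_(i <- js) b i) * pdn setT (Vfun mu B D) (map tag js ++ [:: k]) (index_u b x).
Proof.
set r := Order.min eH (e / Cb b).
have r0 : 0 < r by rewrite lt_min eH0 divr_gt0 // Cb_gt0.
have hrH : forall x, nearv (zerov _) x r -> H x.
  by move=> x hx; apply: heH => i; apply: lt_le_trans (hx i) _; rewrite ge_min lexx.
have hru : forall x, nearv (zerov _) x r -> nearv (zerov _) (index_u b x) e.
  move=> x hx i; apply: lt_le_trans (idx_bound b r0 hx i) _.
  have : r <= e / Cb b by rewrite ge_min lexx orbT.
  by rewrite ler_pdivlMr ?Cb_gt0 // mulrC.
have hcl1 : forall x, region H orth x -> nearv (zerov _) x r -> forall j del, 0 < del ->
    exists hh, 0 < `|hh| < del /\ region H orth (shiftv x j hh).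
  move=> x hx hxr j del del0; have [dd dd0 hdd] := nearv_open hxr.
  set m := Order.min del dd.
  have m0 : 0 < m by rewrite lt_min del0 dd0.
  have m1 : m <= del by rewrite ge_min lexx.
  have m2 : m <= dd by rewrite ge_min lexx orbT.
  exists (m / 2); split.
    by rewrite gtr0_norm; [apply/andP; split; lra | lra].
  split.
    by apply/hrH/hdd/nearv_shift; rewrite gtr0_norm; lra.
  move=> ho i; have := proj2 hx ho i; rewrite /shiftv.
  by case: (i == j) => ?; lra.
elim => [|j js IH] hsize x hx hxr.
- rewrite big_nil mul1r /=.
  apply: (envelope h).
  have [[_ hl] _] := he [:: k] isT (index_u b x) (hru x hxr).
  exact: hl.
- rewrite big_cons /=.
  set G := pdn setT (Vfun mu B D) ([seq tag i | i <- js] ++ [:: k]).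
  set F := pdn (region H orth) (fun x0 => fine (Ybar_beta mu Y x0 b k)) js.
  set c := \prod_(j0 <- js) b j0.
  have hsz : (size (tag j :: ([seq tag i | i <- js] ++ [:: k])) <= M.+1)%N.
    by move: hsize; rewrite /= size_cat size_map /= addn1.
  have [[_ [lg hlg]] _] := he _ hsz (index_u b x) (hru x hxr).
  change (has_pd_within setT G (tag j) (index_u b x) lg) in hlg.
  rewrite (pd_eq hlg); apply: pd_eq; split; first exact: hcl1.
  move=> eps eps0.
  have [dd dd0 hdd] := nearv_open hxr.
  have IHx : F x = c * G (index_u b x) := IH (ltnW hsize) x hx hxr.
  have IHs : forall hh, `|hh| < dd -> region H orth (shiftv x j hh) ->
      F (shiftv x j hh) = c * G (index_u b (shiftv x j hh)).
    by move=> hh hh1 hS; apply: IH (ltnW hsize) _ hS (hdd _ (nearv_shift _ _ hh1)).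
  case: (eqVneq (b j) 0) => [bj0|bjn0].
  + exists dd => // hh /andP[hh0 hhd] hS.
    rewrite IHs // IHx idx_shift bj0 mul0r shiftv0 subrr mul0r !mul0r subr0 normr0.
    exact: eps0.
  + set bc := b j * c.
    have eps'0 : 0 < eps / (`|bc| + 1) by rewrite divr_gt0 // ltr_wpDl.
    have [d1 d10 hd1] := hlg.2 _ eps'0.
    have bjp : 0 < `|b j| by rewrite normr_gt0.
    exists (Order.min dd (d1 / `|b j|)); first by rewrite lt_min dd0 divr_gt0.
    move=> hh /andP[hh0]; rewrite lt_min => /andP[hhd hhd1] hS.
    rewrite IHs // IHx idx_shift.
    have hbh : 0 < `|b j * hh| < d1.
      rewrite normrM mulr_gt0 //=; move: hhd1; rewrite ltr_pdivlMr // mulrC //.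
    have := hd1 _ hbh Logic.I.
    set N := G (shiftv (index_u b x) (tag j) (b j * hh)) - G (index_u b x).
    have hh0' : hh != 0 by rewrite -normr_gt0.
    have -> : (c * G (shiftv (index_u b x) (tag j) (b j * hh)) - c * G (index_u b x)) / hh
        - bc * lg = bc * (N / (b j * hh) - lg).
      by rewrite /bc /N; field; rewrite bjn0 hh0'.
    move=> hlt; rewrite normrM.
    apply: le_lt_trans (ler_wpM2l (normr_ge0 bc) (ltW hlt)) _.
    rewrite mulrA ltr_pdivrMr ?ltr_wpDl //.
    have := normr_ge0 bc; nra.
Qed.

End ChainModel.

End PD.
Import PD.

Module PE.
Import numFieldNormedType.Exports.
Set Implicit Arguments. Unset Strict Implicit. Unset Printing Implicit Defensive.
Section PerModel.
Context {R : realType} {K : nat} (dk : 'I_K -> nat).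
Context {dE : measure_display} {E : measurableType dE}.
Context {dO : measure_display} {Om : measurableType dO}.

Lemma region0 (H : set (idx dk -> R)) orth : nbhd0 H -> region H orth (zerov _).
Proof.
move=> [eH eH0 heH]; split; last by move=> _ i.
by apply: heH => i; rewrite /zerov subrr normr0.
Qed.

Lemma moment_formula M i0 (H : set (idx dk -> R)) (hH : nbhd0 H) orth
  (P : probability Om R) beta (mu : probability E R) B D Y
  (h : model_assumptions (dk:=dk) M i0 (region H orth) P beta mu B D Y)
  (k : 'I_K) (t : M.-tuple (idx dk)) :
  (pdn (region H orth) (fun x => fine (Ybar P beta mu Y x k)) t (zerov _))%:E =
  (moment P beta t * (pdn setT (Vfun mu B D) (map tag t ++ [:: k]) (zerov _))%:E)%E.
Proof.
have [_ [_ [_ ->]]] := A5i h k t.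
have [eH eH0 heH] := hH.
have [e e0 he] := A5iii h.
have h0 := region0 orth hH.
transitivity (\int[P]_w ((\prod_(i <- t) beta w i)%:E *
    (pdn setT (Vfun mu B D) (map tag t ++ [:: k]) (zerov _))%:E))%E.
  apply: eq_integral => w _; rewrite -EFinM; congr (_%:E).
  have hr : nearv (zerov (idx dk)) (zerov (idx dk)) (Order.min eH (e / Cb (beta w))).
    by move=> i; rewrite /zerov subrr normr0 lt_min eH0 divr_gt0 // Cb_gt0.
  by rewrite (chain h eH0 heH e0 he k (eq_leq (size_tuple t)) h0 hr) idx_zero.
by rewrite integralZr //; exact: A5ii h t.
Qed.

Lemma pdn_sym M i0 S (P : probability Om R) beta (mu : probability E R) B D Y
  (h : model_assumptions (dk:=dk) M i0 S P beta mu B D Y)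
  (pre post : seq 'I_K) a b : (size pre + size post + 2 = M.+1)%N ->
  pdn setT (Vfun mu B D) (pre ++ a :: b :: post) (zerov _) =
  pdn setT (Vfun mu B D) (pre ++ b :: a :: post) (zerov _).
Proof.
move=> hs.
have [e e0 he] := A5iii h.
rewrite !pdn_cat.
have hz : nearv (zerov 'I_K) (zerov 'I_K) e by move=> i; rewrite /zerov subrr normr0.
apply: (pdn_ext_ball _ _ hz) => u hu.
set F := pdn setT (Vfun mu B D) post.
have s1 : (size (a :: post) <= M.+1)%N by rewrite /=; lia.
have s2 : (size (b :: post) <= M.+1)%N by rewrite /=; lia.
have s3 : (size (b :: a :: post) <= M.+1)%N by rewrite /=; lia.
have s4 : (size (a :: b :: post) <= M.+1)%N by rewrite /=; lia.
have [rho rho0 hrho] := nearv_open hu.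
have hA : forall v, nearv u v rho -> exists l, has_pd_within setT F a v l.
  by move=> v hv; have [[_ hl] _] := he (a :: post) s1 v (hrho v hv).
have hB : forall v, nearv u v rho -> exists l, has_pd_within setT F b v l.
  by move=> v hv; have [[_ hl] _] := he (b :: post) s2 v (hrho v hv).
have hAB : forall v, nearv u v rho -> exists l, has_pd_within setT (pd setT F a) b v l.
  by move=> v hv; have [[_ hl] _] := he (b :: a :: post) s3 v (hrho v hv).
have hBA : forall v, nearv u v rho -> exists l, has_pd_within setT (pd setT F b) a v l.
  by move=> v hv; have [[_ hl] _] := he (a :: b :: post) s4 v (hrho v hv).
have cAB : contv (pd setT (pd setT F a) b) u := (he (b :: a :: post) s3 u hu).2.
have cBA : contv (pd setT (pd setT F b) a) u := (he (a :: b :: post) s4 u hu).2.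
by rewrite /= -/F (schwarz rho0 hA hB hAB hBA cAB cBA).
Qed.

Lemma pdn_nz M i0 S (P : probability Om R) beta (mu : probability E R) B D Y
  (h : model_assumptions (dk:=dk) M i0 S P beta mu B D Y)
  (g : seq 'I_K) : size g = M.+1 ->
  pdn setT (Vfun mu B D) g (zerov _) != 0.
Proof.
move=> hg; have hg' : size g == M.+1 by rewrite hg.
exact: (A5iv h (Tuple hg')).
Qed.

End PerModel.

End PE.
Import PE.

Module PF.
Import numFieldNormedType.Exports.
Set Implicit Arguments. Unset Strict Implicit. Unset Printing Implicit Defensive.
Section Comb.
Context {R : realType} {K : nat}.

Definition symc (c : seq 'I_K -> R) M := forall pre a b post,
  (size pre + size post + 2 = M.+1)%N -> c (pre ++ a :: b :: post) = c (pre ++ b :: a :: post).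

Lemma rot1 c M : symc c M ->
  forall s pre x, (size pre + size s + 1 = M.+1)%N -> c (pre ++ x :: s) = c (pre ++ rcons s x).
Proof.
move=> sym s; elim: s => [|y s IH] pre x hs; first by [].
rewrite sym; last by move: hs => /=; lia.
rewrite -cat_rcons IH; last by rewrite size_rcons; move: hs => /=; lia.
by rewrite cat_rcons.
Qed.

Lemma rotP c M : symc c M ->
  forall u v, (size u + size v = M.+1)%N -> c (u ++ v) = c (v ++ u).
Proof.
move=> sym u; elim: u => [|x u IH] v hs; first by rewrite cats0.
have := @rot1 c M sym (u ++ v) [::] x; rewrite /= => ->; last by rewrite size_cat; move: hs => /=; lia.
rewrite rcons_cat IH; last by rewrite size_rcons; move: hs => /=; lia.
by rewrite cat_rcons.
Qed.

Lemma nseq_rcons (T : Type) m (x : T) : rcons (nseq m x) x = nseq m.+1 x.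
Proof. by elim: m => //= m ->. Qed.

Lemma ident (c1 c2 : seq 'I_K -> R) M (k0 : 'I_K) :
  symc c1 M -> symc c2 M ->
  (forall g, size g = M.+1 -> c1 g != 0) ->
  c1 (nseq M.+1 k0) = c2 (nseq M.+1 k0) ->
  (forall ks, size ks = M -> forall k k',
     c1 (ks ++ [:: k]) * c2 (ks ++ [:: k']) = c2 (ks ++ [:: k]) * c1 (ks ++ [:: k'])) ->
  forall g, size g = M.+1 -> c1 g = c2 g.
Proof.
move=> sym1 sym2 nz1 base ratio.
have tr : forall g g', c1 g = c1 g' -> c2 g = c2 g' -> c1 g' = c2 g' -> c1 g = c2 g.
  by move=> g g' -> ->.
have rule1 : forall ks k k', size ks = M -> c1 (ks ++ [:: k']) = c2 (ks ++ [:: k']) ->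
    c1 (ks ++ [:: k]) = c2 (ks ++ [:: k]).
  move=> ks k k' hks e.
  have nz : c2 (ks ++ [:: k']) != 0 by rewrite -e nz1 // size_cat hks addn1.
  by apply: (mulIf nz); rewrite -{2}e ratio.
suff claim : forall n s, size s = n -> (n <= M.+1)%N -> c1 (nseq (M.+1 - n) k0 ++ s) = c2 (nseq (M.+1 - n) k0 ++ s).
  by move=> g hg; have := claim _ g hg (leqnn _); rewrite subnn.
elim => [|n IH] s hs hn.
  by move/size0nil: hs => ->; rewrite subn0 cats0.
case: s hs => [//|a s'] /= [hs'].
have IH' := IH s' hs' (ltnW hn).
have e1 : (M.+1 - n = (M - n).+1)%N by lia.
have e2 : (M.+1 - n.+1 = M - n)%N by lia.
rewrite e1 in IH'; rewrite e2.
set A := nseq (M - n) k0.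
have hA : size A = (M - n)%N by rewrite size_nseq.
have step : forall c, symc c M -> c (A ++ a :: s') = c ((s' ++ A) ++ [:: a]).
  move=> c sym; rewrite (rotP sym); last by rewrite /= hA; lia.
  have := @rot1 c M sym (s' ++ A) [::] a; rewrite /= => ->; last by rewrite size_cat hA; lia.
  by rewrite cats1.
have step2 : forall c, symc c M -> c ((s' ++ A) ++ [:: k0]) = c (nseq (M - n).+1 k0 ++ s').
  move=> c sym; rewrite -catA cats1 nseq_rcons (rotP sym) //.
  by rewrite size_nseq; lia.
apply: (tr _ _ (step _ sym1) (step _ sym2)).
apply: (rule1 _ _ k0); first by rewrite size_cat hA; lia.
by rewrite (step2 _ sym1) (step2 _ sym2).
Qed.

End Comb.

End PF.
Import PF.

Lemma iter_mul_expr (R : realType) (x : R) n : iter n ( *%R x) 1 = x ^+ n.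
Proof. by elim: n => [|n IH] //=; rewrite IH exprS. Qed.

Theorem theorem1 (R : realType) (K : nat) (dk : 'I_K -> nat)
  (i0 : idx dk) (hi0 : val (tag i0) = 0%N /\ val (tagged i0) = 0%N)
  (M : nat) (hM : (1 <= M)%N)
  (dE : measure_display) (E : measurableType dE)
  (H : set (idx dk -> R)) (hH : nbhd0 H) (orth : bool)
  (dO1 : measure_display) (Om1 : measurableType dO1) (P1 : probability Om1 R)
  (beta1 : Om1 -> idx dk -> R) (mu1 : probability E R) (B1 : set ('I_K -> R))
  (D1 : ('I_K -> R) -> E -> \bar R) (Y1 : (idx dk -> R) -> (idx dk -> R) -> E -> 'I_K -> R)
  (dO2 : measure_display) (Om2 : measurableType dO2) (P2 : probability Om2 R)
  (beta2 : Om2 -> idx dk -> R) (mu2 : probability E R) (B2 : set ('I_K -> R))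
  (D2 : ('I_K -> R) -> E -> \bar R) (Y2 : (idx dk -> R) -> (idx dk -> R) -> E -> 'I_K -> R)
  (h1 : model_assumptions M i0 (region H orth) P1 beta1 mu1 B1 D1 Y1)
  (h2 : model_assumptions M i0 (region H orth) P2 beta2 mu2 B2 D2 Y2)
  (known_asf : forall x, region H orth x -> forall k : 'I_K,
     Ybar P1 beta1 mu1 Y1 x k = Ybar P2 beta2 mu2 Y2 x k)
  (known_moment : (\int[P1]_w (beta1 w i0 ^+ M)%:E = \int[P2]_w (beta2 w i0 ^+ M)%:E)%E) :
  (forall t : M.-tuple (idx dk), moment P1 beta1 t = moment P2 beta2 t) /\
  (forall g : M.+1.-tuple 'I_K,
     pdn setT (Vfun mu1 B1 D1) g (zerov 'I_K) = pdn setT (Vfun mu2 B2 D2) g (zerov 'I_K)).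
Proof.
pose c1 := fun g => pdn setT (Vfun mu1 B1 D1) g (zerov 'I_K).
pose c2 := fun g => pdn setT (Vfun mu2 B2 D2) g (zerov 'I_K).
pose L := fun k (t : M.-tuple (idx dk)) =>
  pdn (region H orth) (fun x => fine (Ybar P1 beta1 mu1 Y1 x k)) t (zerov _).
have h0 := region0 orth hH.
have fin1 : forall t : M.-tuple (idx dk), moment P1 beta1 t \is a fin_num.
  by move=> t; apply: integrable_fin_num (A5ii h1 t).
have fin2 : forall t : M.-tuple (idx dk), moment P2 beta2 t \is a fin_num.
  by move=> t; apply: integrable_fin_num (A5ii h2 t).
pose r1 := fun t => fine (moment P1 beta1 t).
pose r2 := fun t => fine (moment P2 beta2 t).
have mr1 : forall k t, L k t = r1 t * c1 (map tag t ++ [:: k]).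
  move=> k t; have := moment_formula hH h1 k t.
  by rewrite -(fineK (fin1 t)) -EFinM => -[].
have mr2 : forall k t, L k t = r2 t * c2 (map tag t ++ [:: k]).
  move=> k t; have := moment_formula hH h2 k t.
  rewrite -(fineK (fin2 t)) -EFinM => -[] <-.
  apply: pdn_ext_S h0 => y hy; by rewrite known_asf.
have sym1 : symc c1 M.
  move=> pre a b post hs; exact: (@pdn_sym _ _ _ _ _ _ _ _ _ _ _ _ _ _ _ _ h1 pre post a b hs).
have sym2 : symc c2 M.
  move=> pre a b post hs; exact: (@pdn_sym _ _ _ _ _ _ _ _ _ _ _ _ _ _ _ _ h2 pre post a b hs).
have nz1 : forall g, size g = M.+1 -> c1 g != 0 by move=> g hg; exact: (@pdn_nz _ _ _ _ _ _ _ _ _ _ _ _ _ _ _ _ h1 g hg).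
have nz2 : forall g, size g = M.+1 -> c2 g != 0 by move=> g hg; exact: (@pdn_nz _ _ _ _ _ _ _ _ _ _ _ _ _ _ _ _ h2 g hg).
have szg : forall (t : M.-tuple (idx dk)) k, size (map tag t ++ [:: k]) = M.+1.
  by move=> t k; rewrite size_cat size_map size_tuple addn1.
set k0 := tag i0.
pose t0 := nseq_tuple M i0.
have hprod : forall (Om : Type) (beta : Om -> idx dk -> R) w,
    \prod_(i <- t0) beta w i = beta w i0 ^+ M.
  by move=> Om beta w; rewrite /t0 /= big_nseq iter_mul_expr.
have m0 : moment P1 beta1 t0 = moment P2 beta2 t0.
  rewrite /moment; under eq_integral do rewrite hprod.
  by under [RHS]eq_integral do rewrite hprod.
have m0nz : moment P1 beta1 t0 != 0%E.
  by rewrite /moment; under eq_integral do rewrite hprod; exact: (A4 h1).2.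
have r0 : r1 t0 = r2 t0 by rewrite /r1 /r2 m0.
have r0nz : r1 t0 != 0.
  by apply: contra m0nz => /eqP h; rewrite -(fineK (fin1 t0)) -/(r1 t0) h.
have tags0 : map tag t0 = nseq M k0 by rewrite /t0 /= map_nseq.
have r0nz' : r2 t0 != 0 by rewrite -r0.
have base : c1 (nseq M.+1 k0) = c2 (nseq M.+1 k0).
  have := mr1 k0 t0; rewrite mr2 r0 tags0 cats1 nseq_rcons.
  by move/(mulfI r0nz') => ->.
have ratio : forall ks, size ks = M -> forall k k',
    c1 (ks ++ [:: k]) * c2 (ks ++ [:: k']) = c2 (ks ++ [:: k]) * c1 (ks ++ [:: k']).
  move=> ks hks k k'.
  have hks' : size ks == M by rewrite hks.
  have [t [htag [_ hm]]] := A6 h1 (Tuple hks').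
  have tagst : map tag t = ks.
    have : [tuple of map tag t] = Tuple hks'.
      by apply: eq_from_tnth => m; rewrite tnth_map htag.
    by move/(congr1 val).
  have hr1 : r1 t != 0.
    apply: contra hm => /eqP h.
    by rewrite -(fineK (fin1 t)); apply/eqP; congr (_%:E); exact: h.
  have ek : forall k1, r1 t * c1 (ks ++ [:: k1]) = r2 t * c2 (ks ++ [:: k1]).
    by move=> k1; rewrite -tagst -mr1 -mr2.
  apply: (mulfI hr1); rewrite mulrA ek mulrCA ek.
  by rewrite mulrCA mulrA.
have idc := ident sym1 sym2 nz1 base ratio.
split.
- move=> t; have := mr1 k0 t; rewrite mr2 (idc _ (szg t k0)).
  move/(mulIf (nz2 _ (szg t k0))) => e.
  by rewrite -(fineK (fin1 t)) -(fineK (fin2 t)); congr (_%:E); exact: (esym e).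
- by move=> g; exact: idc _ (size_tuple g).
Qed.
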